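(* There exists $C>0$ such that for all $N$ large enough $$\max_{x\in\mathbb T_N^d}\sup_{\eta\in\mathcal X_N}\Big|E^{\nu_\beta}[f_x\mid\eta_x^\ell]-\tilde f_x(\eta_x^\ell)+\frac{\chi(\eta_x^\ell)}{2\ell_*^d}\frac{\partial^2\tilde f_x}{\partial\rho^2}(\eta_x^\ell)\Big|\le\frac C{\ell^{2d}}.$$
   Context: $\mathbb T_N^d=(\mathbb Z/N\mathbb Z)^d$, $\mathcal X_N=\{0,1\}^{\mathbb T_N^d}$, $(\tau_x\eta)_z=\eta_{z+x}$, $\tau_xh(\eta)=h(\tau_x\eta)$. $\nu_\rho$ denotes the Bernoulli product measure of mean $\rho\in[0,1]$, and $\beta=\frac12$. $\chi(\rho)=\rho(1-\rho)$. $h$ is an $N$-independent local function (depending on finitely many coordinates, supported in a finite box), $\tilde h(\rho)=E^{\nu_\rho}[h]$. Time is fixed and suppressed: $u_x\in[u_-,u_+]$, $0<u_-<u_+<1$, are deterministic values and $f_x(\eta)=\tau_xh(\eta)-\tilde h(u_x)-\tilde h'(u_x)(\eta_x-u_x)$, $\tilde f_x(\rho)=E^{\nu_\rho}[f_x]$. $\ell=\ell(N)$ with $1\ll\ell\ll N$, $\ell_*=2\ell+1$, $\Lambda_{\ell,x}=\{y:|y-x|\le\ell\}$ (a cube with $\ell_*^d$ sites), $\eta_x^\ell=\ell_*^{-d}\sum_{y\in\Lambda_{\ell,x}}\eta_y$. *)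

(* Defs.v *)
From HB Require Import structures.
From mathcomp Require Import all_boot all_order all_algebra.
From mathcomp Require Import all_classical all_reals all_analysis.
Set Implicit Arguments. Unset Strict Implicit. Unset Printing Implicit Defensive.
Import Order.TTheory GRing.Theory Num.Theory.
Import numFieldNormedType.Exports.
Local Open Scope ring_scope.

Section Defs.
Context {R : realType}.

(* discrete torus T_N^d = (Z/NZ)^d ; 'Z_N coincides with Z/NZ for N >= 2,
   which is the only regime relevant for "N large enough" *)
Definition site (N d : nat) := {ffun 'I_d -> 'Z_N}.
Definition config (N d : nat) := {ffun site N d -> bool}.

(* the cube {-r,...,r}^d in Z^d, coordinate z_i = k_i - r *)
Definition cube (r d : nat) := {ffun 'I_d -> 'I_(2 * r + 1)}.

Definition shift (N d r : nat) (x : site N d) (k : cube r d) : site N d :=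
  x + [ffun i => (((k i : nat)%:Z - r%:Z)%:~R : 'Z_N)].

Definition occ (N d : nat) (eta : config N d) (y : site N d) : R :=
  (eta y)%:R.

(* a local function h is given by its support cube {-r..r}^d and
   H : {0,1}^{cube} -> R, h(eta) = H(eta restricted to the cube) *)
Definition local_fun (r d : nat) := {ffun cube r d -> bool} -> R.

Definition tau_h (N d r : nat) (H : local_fun r d) (x : site N d)
  (eta : config N d) : R :=
  H [ffun k => eta (shift x k)].

Definition nu (N d : nat) (rho : R) (eta : config N d) : R :=
  \prod_(z : site N d) (if eta z then rho else 1 - rho).

Definition Enu (N d : nat) (rho : R) (F : config N d -> R) : R :=
  \sum_(eta : config N d) nu rho eta * F eta.

(* htilde(rho) = E^{nu_rho}[h] (computed on the support cube of h) *)
Definition htilde (r d : nat) (H : local_fun r d) (rho : R) : R :=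
  \sum_(xi : {ffun cube r d -> bool})
     (\prod_(k : cube r d) (if xi k then rho else 1 - rho)) * H xi.

Definition fx (N d r : nat) (H : local_fun r d) (u : site N d -> R)
  (x : site N d) (eta : config N d) : R :=
  tau_h H x eta - htilde H (u x)
  - (derive1 (htilde H)) (u x) * (occ eta x - u x).

Definition ftilde (N d r : nat) (H : local_fun r d) (u : site N d -> R)
  (x : site N d) (rho : R) : R :=
  Enu rho (fx H u x).

Definition lstar (l : nat) : nat := 2 * l + 1.

Definition Lambda (N d l : nat) (x : site N d) : {set site N d} :=
  [set shift x k | k : cube l d].

Definition avg (N d l : nat) (x : site N d) (eta : config N d) : R :=
  ((lstar l ^ d)%:R)^-1 * \sum_(y in Lambda l x) occ eta y.

(* elementary conditional expectation E^{mu}[F | X] evaluated at eta,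
   on the finite space X_N with weights mu *)
Definition condE (N d : nat) (mu : config N d -> R) (F : config N d -> R)
  (X : config N d -> R) (eta : config N d) : R :=
  (\sum_(xi : config N d | X xi == X eta) mu xi * F xi)
  / (\sum_(xi : config N d | X xi == X eta) mu xi).

Definition chi (rho : R) : R := rho * (1 - rho).

End Defs.

(* Main.v *)
Require Import Defs.
From HB Require Import structures.
From mathcomp Require Import all_boot all_order all_algebra.
From mathcomp Require Import all_classical all_reals all_analysis.
From mathcomp Require Import ring lra zify.
Import Order.TTheory GRing.Theory Num.Theory.
Import numFieldNormedType.Exports.
Local Open Scope ring_scope.

Definition aa {R : realType} (K n j : nat) : R := 'C(K, j)%:R / 'C(n, j)%:R.

Lemma binS_real {R : realType} (K j : nat) :
  ('C(K, j.+1)%:R : R) = 'C(K, j)%:R * (K%:R - j%:R) / (j.+1)%:R.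
Proof.
have h := mul_bin_left K j.
have [ltKj|leKj] := ltnP K j.
  by rewrite !bin_small ?mul0r ?mul0r // ltnW.
apply: (@mulIf _ (j.+1)%:R); first by rewrite pnatr_eq0.
rewrite mulfVK ?pnatr_eq0 // -natrM mulnC h natrM natrB //; ring.
Qed.

Lemma aaS {R : realType} (K n j : nat) : (j < n)%N ->
  (aa K n j.+1 : R) = aa K n j * ((K%:R - j%:R) / (n%:R - j%:R)).
Proof.
move=> ljn; rewrite /aa !binS_real.
have h1 : ('C(n, j)%:R : R) != 0 by rewrite pnatr_eq0 -lt0n bin_gt0 ltnW.
have h2 : (n%:R - j%:R : R) != 0 by rewrite subr_eq0 eqr_nat neq_ltn ljn orbT.
have h3 : (1 + j%:R : R) != 0 by rewrite -(natrD _ 1 j) pnatr_eq0.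
by field; rewrite h1 h2 h3.
Qed.


Definition errj {R : realType} (K n j : nat) : R :=
  let rho := K%:R / n%:R in
  aa K n j - rho ^+ j + (j * j.-1)%:R / 2 * rho ^+ j.-1 * (1 - rho) / n%:R.

Lemma errS_id {R : realType} (K n j : nat) : (j < n)%N -> (0 < n)%N ->
  let nr : R := n%:R in let jr : R := j%:R in let rho := K%:R / nr in
  errj K n j.+1 = errj K n j * (rho - jr * (1 - rho) / (nr - jr))
    + (j * j.-1)%:R / 2 * rho ^+ j.-1 * (1 - rho) / nr * (jr * (1 - rho) / (nr - jr))
    - jr ^+ 2 * rho ^+ j * (1 - rho) / (nr * (nr - jr)).
Proof.
move=> ljn n0 nr jr rho.
have nr0 : nr != 0 by rewrite /nr pnatr_eq0 -lt0n.
have hD0 : nr - jr != 0 by rewrite /nr /jr subr_eq0 eqr_nat neq_ltn ljn orbT.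
have Kr : (K%:R : R) = rho * nr by rewrite /rho mulfVK.
rewrite /errj -/nr -/rho /= aaS // Kr -/jr.
rewrite !natrM; move: hD0; rewrite /jr; case: (j) => [|j'] hD0.
  rewrite !mul0r !mulr0 !mul0r; field; exact: nr0.
move: hD0; rewrite /= !mulrSr !exprS => hD0; field; rewrite hD0; exact: nr0.
Qed.

Lemma ebound {R : realType} (j : nat) : exists C : R, 0 <= C /\
  forall n K : nat, (2 * j <= n)%N -> (0 < n)%N -> (K <= n)%N ->
  `|errj K n j| <= C / n%:R ^+ 2.
Proof.
elim: j => [|j [C [C0 IH]]].
  exists 0; split => // n K _ _ _.
  by rewrite /errj /aa !bin0 mul0n !mul0r divr1 expr0 subrr add0r normr0.
exists (C + j%:R ^+ 3 + 2 * j%:R ^+ 2); split.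
  by rewrite !addr_ge0 ?exprn_ge0 ?mulr_ge0 ?ler0n.
move=> n K h2j n0 Kn.
have h2j' : (2 * j <= n)%N by lia.
have ljn : (j < n)%N by lia.
have hE := IH n K h2j' n0 Kn.
have id := @errS_id R K n j ljn n0; simpl in id; rewrite id; clear id.
set nr : R := n%:R in hE *. set jr : R := j%:R.
set rho : R := K%:R / nr.
have nr0 : 0 < nr by rewrite ltr0n.
have hrho : 0 <= rho <= 1.
  apply/andP; split; first by rewrite divr_ge0 ?ler0n.
  by rewrite ler_pdivrMr // mul1r ler_nat.
set D : R := nr - jr.
have jr0 : 0 <= jr by rewrite ler0n.
have hjn : 2 * jr + 2 <= nr.
  rewrite /nr /jr; have := h2j; rewrite -(ler_nat R) natrM mulrSr -addn1 natrD; lra.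
have D0 : 0 < D by rewrite /D; lra.
have hD : nr ^+ 2 <= 2 * nr * D by rewrite /D; nra.
set delta := jr * (1 - rho) / D.
set E := (errj K n j : R) in hE *.
set c : R := (j * j.-1)%:R.
set P := rho ^+ j.-1.
set Q := rho ^+ j.
have hP : 0 <= P <= 1 by rewrite exprn_ge0 ?exprn_ile1 //; case/andP: hrho.
have hQ : 0 <= Q <= 1 by rewrite exprn_ge0 ?exprn_ile1 //; case/andP: hrho.
have hc : 0 <= c <= jr ^+ 2.
  by rewrite ler0n /c /jr -natrX ler_nat expnS expn1 leq_mul2l leq_pred orbT.
have hdelta : 0 <= delta <= 1.
  apply/andP; split; first by rewrite /delta divr_ge0 ?mulr_ge0 //; lra.
  rewrite /delta ler_pdivrMr // mul1r /D; nra.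
have hs : `|rho - delta| <= 1 by rewrite ler_norml; lra.
have eT : c / 2 * P * (1 - rho) / nr * delta = (c * P * ((1 - rho) * (1 - rho))) * (jr * (2 * nr * D)^-1).
  by rewrite /delta; field; rewrite !lt0r_neq0.
have hinv1 : (2 * nr * D)^-1 <= (nr ^+ 2)^-1.
  by rewrite lef_pV2 ?posrE ?exprn_gt0 ?mulr_gt0.
have hinv2 : (nr * D)^-1 <= 2 * (nr ^+ 2)^-1.
  have -> : 2 * (nr ^+ 2)^-1 = (nr ^+ 2 / 2)^-1 by rewrite invf_div.
  by rewrite lef_pV2 ?posrE ?exprn_gt0 ?mulr_gt0 ?divr_gt0 //; lra.
have ht : 0 <= c / 2 * P * (1 - rho) / nr * delta <= jr ^+ 3 * (nr ^+ 2)^-1.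
  rewrite eT; apply/andP; split.
    by rewrite mulr_ge0 ?mulr_ge0 ?invr_ge0 //; nra.
  rewrite (_ : jr ^+ 3 * _ = jr ^+ 2 * (jr * (nr ^+ 2)^-1)); last by rewrite exprS; ring.
  apply: ler_pM; first by rewrite !mulr_ge0 //; nra.
    by rewrite mulr_ge0 ?invr_ge0 //; nra.
    have h1 : 0 <= (1 - rho) * (1 - rho) <= 1 by nra.
    have h2 : c * P <= jr ^+ 2 by nra.
    nra.
  by apply: ler_wpM2l.
have eW : jr ^+ 2 * Q * (1 - rho) / (nr * D) = (Q * (1 - rho)) * (jr ^+ 2 * (nr * D)^-1).
  by ring.
have hw : 0 <= jr ^+ 2 * Q * (1 - rho) / (nr * D) <= 2 * jr ^+ 2 * (nr ^+ 2)^-1.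
  rewrite eW; apply/andP; split.
    by rewrite mulr_ge0 ?mulr_ge0 ?invr_ge0 ?exprn_ge0 //; nra.
  rewrite -[2 * jr ^+ 2 * _]mul1r; apply: ler_pM; first by nra.
    by rewrite mulr_ge0 ?invr_ge0 ?exprn_ge0 //; nra.
    nra.
  rewrite (mulrC 2) -mulrA.
  rewrite (_ : jr * (jr / (nr * D)) = jr ^+ 2 * (nr * D)^-1); last by ring.
  rewrite (_ : jr ^+ 2 * 2 / nr ^+ 2 = jr ^+ 2 * (2 * (nr ^+ 2)^-1)); last by ring.
  by apply: ler_wpM2l; rewrite ?exprn_ge0.
have hEs : `|E * (rho - delta)| <= C / nr ^+ 2.
  rewrite normrM -[C / _]mulr1; apply: ler_pM => //.
rewrite (_ : (C + jr ^+ 3 + 2 * jr ^+ 2) / nr ^+ 2 = C / nr ^+ 2 + jr ^+ 3 * (nr ^+ 2)^-1 + 2 * jr ^+ 2 * (nr ^+ 2)^-1); last by ring.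
set t := c / 2 * P * (1 - rho) / nr * delta in ht *.
set w := jr ^+ 2 * Q * (1 - rho) / (nr * D) in hw *.
set Es := E * (rho - delta) in hEs *.
have := ler_normD Es t; have := ler_normD (Es + t) (- w); rewrite normrN.
rewrite (ger0_norm (_ : 0 <= t)); last by case/andP: ht.
rewrite (ger0_norm (_ : 0 <= w)); last by case/andP: hw.
set i2 := (nr ^+ 2)^-1 in ht hw *.
set a1 := C / nr ^+ 2 in hEs *.
move: ht hw => /andP[_ ht] /andP[_ hw].
lra.
Qed.


Definition mono {R : realFieldType} {T : finType} (Y : {set T})
  (xi : {ffun T -> bool}) : R := \prod_(y in Y) (xi y)%:R.

Definition cntB {T : finType} (B : {set T}) (xi : {ffun T -> bool}) : nat :=
  (\sum_(y in B) (xi y : nat))%N.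
Definition swp {T : finType} (s t z : T) : T :=
  if z == s then t else if z == t then s else z.

Lemma swpK {T : finType} (s t : T) : involutive (swp s t).
Proof.
move=> z; rewrite /swp.
case: (eqVneq z s) => [->|zs]; first by rewrite eqxx; case: eqVneq.
case: (eqVneq z t) => [->|zt]; first by rewrite eqxx.
by rewrite (negPf zs) (negPf zt).
Qed.

Lemma swp_inj {T : finType} (s t : T) : injective (swp s t).
Proof. exact: inv_inj (swpK s t). Qed.

Lemma swp_in {T : finType} (B : {set T}) s t z : s \in B -> t \in B ->
  (swp s t z \in B) = (z \in B).
Proof.
move=> sB tB; rewrite /swp.
case: (eqVneq z s) => [->|zs]; first by rewrite sB tB.
by case: (eqVneq z t) => [->|zt]; first by rewrite sB tB.
Qed.

Definition act {T : finType} (s t : T) (xi : {ffun T -> bool}) : {ffun T -> bool} :=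
  [ffun z => xi (swp s t z)].

Lemma actK {T : finType} (s t : T) : involutive (act s t).
Proof. by move=> xi; apply/ffunP => z; rewrite !ffunE swpK. Qed.

Lemma cnt_act {T : finType} (B : {set T}) s t xi : s \in B -> t \in B ->
  cntB B (act s t xi) = cntB B xi.
Proof.
move=> sB tB; rewrite /cntB (reindex_inj (swp_inj s t)) /=.
apply: eq_big => [z|z _]; first by rewrite swp_in.
by rewrite ffunE swpK.
Qed.

Lemma mono_act {R : realFieldType} {T : finType} (Y : {set T}) s t xi :
  (mono Y (act s t xi) : R) = mono (swp s t @: Y) xi.
Proof.
rewrite /mono big_imset /=; last by move=> a b _ _; apply: swp_inj.
by apply: eq_bigr => z _; rewrite ffunE.
Qed.

Definition SK {R : realFieldType} {T : finType} (B : {set T}) (K : nat) (Y : {set T}) : R :=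
  \sum_(xi | cntB B xi == K) mono Y xi.

Lemma SK_swap {R : realFieldType} {T : finType} (B : {set T}) K Y s t :
  s \in B -> t \in B -> (SK B K Y : R) = SK B K (swp s t @: Y).
Proof.
move=> sB tB; rewrite /SK (reindex_inj (inv_inj (actK s t))) /=.
by apply: eq_big => [xi|xi _]; [rewrite cnt_act | rewrite mono_act].
Qed.

Lemma SK_card {R : realFieldType} {T : finType} (B : {set T}) K (Y1 Y2 : {set T}) :
  Y1 \subset B -> Y2 \subset B -> #|Y1| = #|Y2| ->
  (SK B K Y1 : R) = SK B K Y2.
Proof.
move=> s1 s2 hc.
move: {2}#|Y2 :\: Y1| (leqnn #|Y2 :\: Y1|) => k.
elim: k Y2 s2 hc => [|k IH] Y2 s2 hc hk.
  have : Y2 :\: Y1 == finset.set0 by rewrite -cards_eq0 -leqn0.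
  rewrite finset.setD_eq0 => sub21.
  have e : Y2 =i Y1 by apply/subset_cardP.
  by have -> : Y2 = Y1 by apply/setP.
have [hk'|lt] := leqP #|Y2 :\: Y1| k; first exact: IH.
have ek : #|Y2 :\: Y1| = k.+1 by apply/eqP; rewrite eqn_leq hk lt.
have e12 : #|Y1 :\: Y2| = #|Y2 :\: Y1|.
  have h1 := cardsID Y2 Y1; have h2 := cardsID Y1 Y2.
  rewrite finset.setIC in h2; lia.
have /set0Pn [s hs] : Y2 :\: Y1 != finset.set0 by rewrite -cards_eq0 ek.
have /set0Pn [t ht] : Y1 :\: Y2 != finset.set0 by rewrite -cards_eq0 e12 ek.
move: (hs) (ht); rewrite !inE => /andP[sY1 sY2] /andP[tY2 tY1].
have sB : s \in B by apply: (fintype.subsetP s2).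
have tB : t \in B by apply: (fintype.subsetP s1).
rewrite (SK_swap (R:=R) B K Y2 s t sB tB).
apply: IH.
- apply/fintype.subsetP => z /imsetP [w wY ->]; rewrite swp_in //; exact: (fintype.subsetP s2).
- by rewrite card_imset //; apply: swp_inj.
- have sub : (swp s t @: Y2) :\: Y1 \subset (Y2 :\: Y1) :\ s.
    apply/fintype.subsetP => z; rewrite !inE => /andP[zY1 /imsetP [w wY ez]].
    move: zY1; rewrite ez /swp.
    case: (eqVneq w s) => [ws|ws]; first by rewrite tY1.
    case: (eqVneq w t) => [wt|wt]; first by move: wY; rewrite wt (negPf tY2).
    by move=> ->; rewrite ws wY.
  have := subset_leq_card sub.
  have := cardsD1 s (Y2 :\: Y1); rewrite hs ek /= => e3; lia.
Qed.

Lemma mono_ind {R : realFieldType} {T : finType} (Y : {set T}) xi :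
  (mono Y xi : R) = (Y \subset [set y | xi y])%:R.
Proof.
rewrite /mono; case: (boolP (Y \subset _)) => [/fintype.subsetP h|/subsetPn [y yY nxy]].
  by rewrite big1 // => y /h; rewrite inE => ->.
rewrite (bigD1 y) //= ; move: nxy; rewrite inE => /negPf ->; by rewrite mul0r.
Qed.

Lemma cntB_card {T : finType} (B : {set T}) xi :
  cntB B xi = #|B :&: [set y | xi y]|.
Proof.
rewrite /cntB -sum1_card big_mkcond [RHS]big_mkcond; apply: eq_bigr => y _.
by rewrite !inE; case: (y \in B); case: (xi y).
Qed.

Lemma sum_draws {R : realFieldType} {T : finType} (B : {set T}) xi j :
  \sum_(Y : {set T} | (Y \subset B) && (#|Y| == j)) (mono Y xi : R)
  = ('C(cntB B xi, j))%:R.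
Proof.
under eq_bigr do rewrite mono_ind.
rewrite cntB_card -cards_draws -sumr_const.
rewrite [RHS]big_mkcond [LHS]big_mkcond; apply: eq_bigr => Y _ /=.
rewrite inE finset.subsetI.
by case: (Y \subset B); case: (Y \subset _); case: (#|Y| == j).
Qed.

Lemma canon {R : realFieldType} {T : finType} (B : {set T}) K (Y : {set T}) :
  Y \subset B ->
  ('C(#|B|, #|Y|))%:R * (SK B K Y : R)
  = #|[set xi | cntB B xi == K]|%:R * ('C(K, #|Y|))%:R.
Proof.
move=> YB.
have e1 : \sum_(Y' : {set T} | (Y' \subset B) && (#|Y'| == #|Y|)) (SK B K Y' : R)
          = ('C(#|B|, #|Y|))%:R * SK B K Y.
  rewrite (eq_bigr (fun _ => SK B K Y)); last first.
    by move=> Y' /andP[h1 /eqP h2]; apply: SK_card.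
  rewrite -cards_draws sumr_const mulr_natl.
  by congr (_ *+ _); apply: eq_card => Y'; rewrite inE.
rewrite -e1 /SK exchange_big /=.
rewrite (eq_bigr (fun _ => ('C(K, #|Y|))%:R)); last first.
  by move=> xi /eqP <-; rewrite sum_draws.
by rewrite sumr_const mulr_natl; congr (_ *+ _); apply: eq_card => xi; rewrite inE.
Qed.

Lemma Enu_mono {R : realType} (N d : nat) (rho : R) (Y : {set site N d}) :
  Enu rho (mono Y) = rho ^+ #|Y|.
Proof.
rewrite /Enu /nu /mono.
under eq_bigr => eta _ do rewrite [X in _ * X]big_mkcond -big_split /=.
rewrite -(bigA_distr_bigA (fun z b => (if b then rho else 1 - rho) * (if z \in Y then (b%:R : R) else 1))) /=.
under eq_bigr => z _ do rewrite big_bool /=.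
rewrite -prodr_const [RHS]big_mkcond /=; apply: eq_bigr => z _.
by case: (z \in Y) => /=; ring.
Qed.

Definition coef {r d : nat} (zeta : {ffun cube r d -> bool}) (J : {set cube r d}) {R : realType} : R :=
  \prod_k (if k \in J then (if zeta k then 1 else -1) else (if zeta k then 0 else 1)).

Lemma tau_expand {R : realType} (N d r : nat) (H : @local_fun R r d) (x : site N d)
  (eta : config N d) :
  injective (@Defs.shift N d r x) ->
  tau_h H x eta = \sum_(zeta : {ffun cube r d -> bool}) \sum_(J : {set cube r d})
     (H zeta * coef zeta J) * mono (@Defs.shift N d r x @: J) eta.
Proof.
move=> sinj.
rewrite /tau_h; set xi := [ffun k => eta (Defs.shift x k)].
have e1 : H xi = \sum_zeta H zeta * (xi == zeta)%:R.
  rewrite (bigD1 xi) //= eqxx mulr1 big1 ?addr0 // => zeta hz.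
  by rewrite eq_sym (negPf hz) mulr0.
rewrite e1; apply: eq_bigr => zeta _.
have e2 : ((xi == zeta)%:R : R) = \prod_k ((if zeta k then 1 else -1) * (xi k)%:R + (if zeta k then 0 else 1)).
  case: (eqVneq xi zeta) => [<-|ne].
    by rewrite big1 // => k _; case: (xi k) => /=; ring.
  have [k hk] : exists k, xi k != zeta k.
    apply/existsP; rewrite -negb_forall; apply: contra ne => /forallP h.
    by apply/eqP/ffunP => k; apply/eqP.
  rewrite (bigD1 k) //=.
  by move: hk; case: (xi k); case: (zeta k) => //= _; rewrite ?mul0r; ring.
rewrite e2 bigA_distr mulr_sumr; apply: eq_bigr => J _.
rewrite -mulrA; congr (_ * _).
rewrite /coef /mono big_imset /=; last by move=> a b _ _; apply: sinj.
rewrite [X in _ = _ * X]big_mkcond -big_split /=; apply: eq_bigr => k _.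
by case: (k \in J); rewrite ?ffunE //= mulr1.
Qed.

Arguments tau_expand {R N d r} H x eta _.

Lemma wsum_lin {R : realType} {T : finType} (v : {ffun T -> bool} -> R)
  (I1 I2 : finType) (al : I1 -> I2 -> R) (Ys : I1 -> I2 -> {set T}) (Y0 Y1 : {set T})
  (c0 c1 u : R) (F : {ffun T -> bool} -> R) :
  (forall xi, F xi = \sum_i \sum_j al i j * mono (Ys i j) xi
                     - c0 * mono Y0 xi - c1 * (mono Y1 xi - u * mono Y0 xi)) ->
  \sum_xi v xi * F xi =
    \sum_i \sum_j al i j * (\sum_xi v xi * mono (Ys i j) xi)
    - c0 * (\sum_xi v xi * mono Y0 xi)
    - c1 * ((\sum_xi v xi * mono Y1 xi) - u * (\sum_xi v xi * mono Y0 xi)).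
Proof.
move=> hF.
have e : forall xi, v xi * F xi = v xi * (\sum_i \sum_j al i j * mono (Ys i j) xi)
   - c0 * (v xi * mono Y0 xi) - (c1 * (v xi * mono Y1 xi) - c1 * u * (v xi * mono Y0 xi)).
  by move=> xi; rewrite hF; ring.
rewrite (eq_bigr _ (fun xi _ => e xi)) !sumrB -!mulr_sumr mulrBr mulrA.
congr (_ - _ - (_ - _)).
under eq_bigr do rewrite mulr_sumr.
rewrite exchange_big; apply: eq_bigr => i _.
under eq_bigr do rewrite mulr_sumr.
rewrite exchange_big; apply: eq_bigr => j _.
by rewrite mulr_sumr; apply: eq_bigr => xi _; rewrite mulrCA.
Qed.

Arguments wsum_lin {R T} v {I1 I2 al Ys Y0 Y1 c0 c1 u F} _.

Lemma condE_wsum {R : realType} (N d : nat) (mu F X : config N d -> R) eta :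
  condE mu F X eta = \sum_xi ((if X xi == X eta then mu xi else 0)
     / (\sum_(xi' | X xi' == X eta) mu xi')) * F xi.
Proof.
rewrite /condE big_mkcond mulr_suml; apply: eq_bigr => xi _.
by case: (X xi == X eta); rewrite ?mul0r //; ring.
Qed.

Lemma Zcast_inj (N l a b : nat) : (2 * l + 1 <= N)%N -> (0 < l)%N ->
  (a < 2 * l + 1)%N -> (b < 2 * l + 1)%N ->
  (((a%:Z - l%:Z)%:~R : 'Z_N) = ((b%:Z - l%:Z)%:~R : 'Z_N)) -> a = b.
Proof.
move=> hN l0 ha hb; rewrite !intrB -!pmulrn => /addIr /(congr1 val).
have N1 : (1 < N)%N by lia.
rewrite /= !val_Zp_nat // !modn_small //; lia.
Qed.

Lemma shift_inj (N d l : nat) (x : site N d) : (2 * l + 1 <= N)%N -> (0 < l)%N ->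
  injective (@Defs.shift N d l x).
Proof.
move=> hN l0 k k'; rewrite /Defs.shift => /addrI /ffunP h.
apply/ffunP => i; have := h i; rewrite !ffunE => e.
by apply: val_inj; apply: (@Zcast_inj _ _ _ _ hN l0 (ltn_ord _) (ltn_ord _) e).
Qed.

Arguments shift_inj {N d l} x hN l0.

Lemma emb_proof (r l : nat) (h : (r <= l)%N) (a : 'I_(2 * r + 1)) :
  (a + (l - r) < 2 * l + 1)%N.
Proof. have := ltn_ord a; lia. Qed.
Arguments emb_proof {r l} h a.

Definition emb (r l d : nat) (h : (r <= l)%N) (k : cube r d) : cube l d :=
  [ffun i => Ordinal (emb_proof h (k i))].
Arguments emb {r l d} h k.

Lemma shift_emb (N d r l : nat) (h : (r <= l)%N) (x : site N d) (k : cube r d) :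
  Defs.shift x (emb h k) = Defs.shift x k.
Proof.
rewrite /Defs.shift; congr (_ + _); apply/ffunP => i; rewrite !ffunE /=.
congr (_%:~R); lia.
Qed.

Arguments shift_emb {N d r l} h x k.

Lemma emb_inj (r l d : nat) (h : (r <= l)%N) : injective (@emb r l d h).
Proof.
move=> k k' /ffunP e; apply/ffunP => i; have := e i; rewrite !ffunE => /(congr1 val) /=.
by move/eqP; rewrite eqn_add2r => /eqP /val_inj.
Qed.

Lemma shiftr_inj (N d r l : nat) (x : site N d) : (2 * l + 1 <= N)%N -> (0 < l)%N ->
  (r <= l)%N -> injective (@Defs.shift N d r x).
Proof.
move=> hN l0 h k k'; rewrite -!(shift_emb h) => /(shift_inj x hN l0); exact: emb_inj.
Qed.

Lemma card_Lambda (N d l : nat) (x : site N d) : (2 * l + 1 <= N)%N -> (0 < l)%N ->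
  #|Lambda l x| = (lstar l ^ d)%N.
Proof.
move=> hN l0; rewrite /Lambda card_imset; last exact: shift_inj x hN l0.
by rewrite card_ffun !card_ord /lstar.
Qed.

Arguments card_Lambda {N d l} x hN l0.

Lemma sub_Lambda (N d r l : nat) (x : site N d) (J : {set cube r d}) :
  (r <= l)%N -> (@Defs.shift N d r x @: J) \subset Lambda l x.
Proof.
move=> h; apply/fintype.subsetP => z /imsetP [k _ ->].
by rewrite -(shift_emb h); apply: imset_f.
Qed.

Arguments sub_Lambda {N d r l} x J _.

Lemma x_Lambda (N d l : nat) (x : site N d) : x \in Lambda l x.
Proof.
have lp : (l < 2 * l + 1)%N by lia.
apply/imsetP; exists [ffun i : 'I_d => Ordinal lp] => //.
rewrite /Defs.shift; apply/ffunP => i; rewrite !ffunE /= subrr mulr0z addr0 //.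
Qed.

Lemma nu_half {R : realType} (N d : nat) (xi : config N d) :
  nu (1 / 2 : R) xi = (1 / 2) ^+ #|site N d|.
Proof.
rewrite /nu (eq_bigr (fun=> 1 / 2)) ?prodr_const ?cardT // => z _.
by case: (xi z) => //; field.
Qed.

Lemma condE_unif {R : realType} (N d : nat) (F X : config N d -> R) eta :
  condE (nu (1 / 2)) F X eta =
  (\sum_(xi | X xi == X eta) F xi) / #|[set xi | X xi == X eta]|%:R.
Proof.
rewrite /condE; under eq_bigr do rewrite nu_half.
set Z := (\sum_(xi | _) nu _ xi).
have -> : Z = \sum_(xi | X xi == X eta) (1 / 2 : R) ^+ #|site N d|.
  by apply: eq_bigr => xi _; rewrite nu_half.
rewrite -mulr_sumr sumr_const.
have c0 : (#|[set xi | X xi == X eta]| != 0)%N.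
  by rewrite -lt0n card_gt0; apply/set0Pn; exists eta; rewrite inE.
have -> : #|(fun xi => X xi == X eta)| = #|[set xi | X xi == X eta]|.
  by apply: eq_card => xi; rewrite inE.
rewrite -[_ *+ #|[set _ | _]|]mulr_natr.
have w0 : (1 / 2 : R) ^+ #|site N d| != 0 by rewrite expf_neq0.
have c0' : (#|[set xi | X xi == X eta]|%:R : R) != 0 by rewrite pnatr_eq0.
by rewrite invfM mulrACA mulfV // mul1r.
Qed.

Lemma avg_cnt {R : realType} (N d l : nat) (x : site N d) (xi : config N d) :
  (avg l x xi : R) = ((lstar l ^ d)%:R)^-1 * (cntB (Lambda l x) xi)%:R.
Proof. by rewrite /avg /cntB natr_sum. Qed.

Lemma condE_mono {R : realType} (N d l : nat) (x : site N d) (eta : config N d)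
  (Y : {set site N d}) :
  (2 * l + 1 <= N)%N -> (0 < l)%N -> Y \subset Lambda l x ->
  condE (nu (1 / 2 : R)) (mono Y) (avg l x) eta
  = aa (cntB (Lambda l x) eta) (lstar l ^ d) #|Y|.
Proof.
move=> hN l0 YB; rewrite condE_unif.
set B := Lambda l x; set K := cntB B eta.
have n0 : ((lstar l ^ d)%:R : R)^-1 != 0.
  by rewrite invr_eq0 pnatr_eq0 expn_eq0 /lstar; lia.
have eqc : forall xi, (avg l x xi == avg l x eta :> R) = (cntB B xi == K).
  move=> xi; rewrite !avg_cnt; apply/eqP/eqP => [h|->//].
  by apply/eqP; rewrite -(eqr_nat R); apply/eqP; apply: (mulfI n0) h.
rewrite (eq_bigl _ _ eqc).
have -> : [set xi | avg l x xi == avg l x eta :> R] = [set xi | cntB B xi == K].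
  by apply/setP => xi; rewrite !inE eqc.
have hc := @canon R _ B K Y YB.
rewrite /SK in hc; rewrite /aa -(card_Lambda x hN l0).
have W0 : (#|[set xi | cntB B xi == K]|%:R : R) != 0.
  by rewrite pnatr_eq0 -lt0n card_gt0; apply/set0Pn; exists eta; rewrite inE.
have C0 : ('C(#|B|, #|Y|)%:R : R) != 0.
  by rewrite pnatr_eq0 -lt0n bin_gt0 subset_leq_card.
apply: (mulfI C0); rewrite mulrA hc; field; rewrite W0 C0 //.
Qed.

Lemma ebound_upto {R : realType} (J : nat) : exists C : R, 0 <= C /\
  forall j n K : nat, (j <= J)%N -> (2 * J <= n)%N -> (0 < n)%N -> (K <= n)%N ->
  `|errj K n j| <= C / n%:R ^+ 2.
Proof.
elim: J => [|J [C1 [C10 IH]]].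
  have [C [C0 hC]] := @ebound R 0; exists C; split => // j n K; rewrite leqn0 => /eqP ->.
  exact: hC.
have [C2 [C20 hC2]] := @ebound R J.+1.
exists (C1 + C2); split; first by rewrite addr_ge0.
move=> j n K hj hn n0 Kn.
have n2 : 0 <= (n%:R : R) ^+ 2 by rewrite exprn_ge0.
have [hjJ|hjJ] := leqP j J.
  apply: le_trans (IH j n K hjJ _ n0 Kn) _; first lia.
  by rewrite ler_pM2r ?invr_gt0 ?exprn_gt0 ?ltr0n // lerDl.
have -> : j = J.+1 by lia.
apply: le_trans (hC2 n K hn n0 Kn) _.
by rewrite ler_pM2r ?invr_gt0 ?exprn_gt0 ?ltr0n // lerDr.
Qed.

Lemma fx_expand {R : realType} (N d r : nat) (H : @local_fun R r d) (u : site N d -> R)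
  (x : site N d) : injective (@Defs.shift N d r x) -> forall xi,
  fx H u x xi = \sum_(zeta : {ffun cube r d -> bool}) \sum_(J : {set cube r d})
     (H zeta * coef zeta J) * mono (@Defs.shift N d r x @: J) xi
   - htilde H (u x) * mono finset.set0 xi
   - derive1 (htilde H) (u x) * (mono [set x] xi - u x * mono finset.set0 xi).
Proof.
move=> sinj xi; rewrite /fx (tau_expand H x xi sinj) /mono big_set0 big_set1 !mulr1.
by [].
Qed.

Arguments fx_expand {R N d r} H u x _ xi.

Lemma Enu_mono' {R : realType} (N d : nat) (rho : R) (Y : {set site N d}) :
  \sum_xi nu rho xi * mono Y xi = rho ^+ #|Y|.
Proof. exact: Enu_mono. Qed.

Definition Pf {R : realType} (d r : nat) (H : @local_fun R r d) (c0 c1 v : R) : {poly R} :=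
  \sum_(zeta : {ffun cube r d -> bool}) \sum_(J : {set cube r d})
     (H zeta * coef zeta J) *: 'X^#|J| - c0%:P - c1 *: ('X^1 - v%:P).

Arguments Pf {R d r} H c0 c1 v.

Lemma ftilde_eq {R : realType} (N d r : nat) (H : @local_fun R r d) (u : site N d -> R)
  (x : site N d) : injective (@Defs.shift N d r x) ->
  ftilde H u x = horner (Pf H (htilde H (u x)) (derive1 (htilde H) (u x)) (u x)).
Proof.
move=> sinj; apply: funext => rho.
rewrite /ftilde /Enu (wsum_lin _ (fx_expand H u x sinj)).
under eq_bigr => z _ do under eq_bigr => J _ do rewrite Enu_mono' card_imset //.
rewrite !Enu_mono' cards0 cards1 /Pf.
rewrite !hornerE horner_sum; congr (_ - _ - _).
apply: eq_bigr => z _; rewrite horner_sum; apply: eq_bigr => J _.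
by rewrite !hornerE.
Qed.
Arguments ftilde_eq {R N d r} H u x _.

Lemma d2_eq {R : realType} (d r : nat) (H : @local_fun R r d) (c0 c1 v rho : R) :
  derive1n 2 (horner (Pf H c0 c1 v)) rho =
  \sum_(zeta : {ffun cube r d -> bool}) \sum_(J : {set cube r d})
     (H zeta * coef zeta J) * (rho ^+ (#|J| - 2) *+ #|J| ^_ 2).
Proof.
have -> : derive1n 2 (horner (Pf H c0 c1 v)) = horner ((Pf H c0 c1 v)^`(2)).
  by rewrite /derive1n /= -!derivE.
have hm : forall (c : R) j, ((c *: 'X^j)^`(2)).[rho] = c * (rho ^+ (j - 2) *+ j ^_ 2).
  by move=> c j; rewrite derivnZ derivnXn hornerZ hornerMn hornerXn.
have hx : (c1 *: ('X^1 - v%:P))^`(2) = 0.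
  by rewrite derivnZ derivnB derivnXn derivnC /= mulr0n subr0 scaler0.
rewrite /Pf !derivnB hx derivnC /= subr0 hornerD hornerN hornerC subr0.
rewrite !raddf_sum horner_sum; apply: eq_bigr => z _.
rewrite !raddf_sum horner_sum; apply: eq_bigr => J _.
exact: hm.
Qed.

Lemma conv_corr {R : realType} (j : nat) (rho nr : R) :
  chi rho / (2 * nr) * (rho ^+ (j - 2) *+ j ^_ 2)
  = (j * j.-1)%:R / 2 * rho ^+ j.-1 * (1 - rho) / nr.
Proof.
rewrite /chi; case: j => [|[|j]].
- by rewrite ffact0n ?mulr0n ?mulr0 ?mul0n ?mul0r.
- by rewrite ffact_small // mulr0n mulr0 /= !mul0r.
rewrite ffactnS ffactn1 -mulr_natr !natrM /=.
have -> : (j.+2 - 2 = j)%N by lia.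
rewrite !exprS invfM; ring.
Qed.

Lemma sum3 {R : realType} (I1 I2 : finType) (f g h : I1 -> I2 -> R) (k : R) :
  \sum_i \sum_j f i j - \sum_i \sum_j g i j + k * \sum_i \sum_j h i j
  = \sum_i \sum_j (f i j - g i j + k * h i j).
Proof.
rewrite -sumrB mulr_sumr -big_split /=; apply: eq_bigr => i _.
by rewrite -sumrB mulr_sumr -big_split.
Qed.

Lemma condE_mono' {R : realType} (N d l : nat) (x : site N d) (eta : config N d)
  (Y : {set site N d}) :
  Y \subset Lambda l x -> (2 * l + 1 <= N)%N -> (0 < l)%N ->
  \sum_xi ((if (avg l x xi : R) == avg l x eta then nu (1 / 2 : R) xi else 0)
     / (\sum_(xi' | (avg l x xi' : R) == avg l x eta) nu (1 / 2 : R) xi')) * mono Y xi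
  = aa (cntB (Lambda l x) eta) (lstar l ^ d) #|Y|.
Proof. by move=> YB hN l0; rewrite -condE_wsum condE_mono. Qed.

Arguments condE_mono' {R N d l} x eta {Y} _ _ _.

Lemma ftilde_val {R : realType} (N d r : nat) (H : @local_fun R r d) (u : site N d -> R)
  (x : site N d) (rho : R) : injective (@Defs.shift N d r x) ->
  ftilde H u x rho = \sum_(zeta : {ffun cube r d -> bool}) \sum_(J : {set cube r d})
     (H zeta * coef zeta J) * rho ^+ #|J|
   - htilde H (u x) - derive1 (htilde H) (u x) * (rho - u x).
Proof.
move=> sinj.
rewrite /ftilde /Enu (wsum_lin _ (fx_expand H u x sinj)).
under eq_bigr => z _ do under eq_bigr => J _ do rewrite Enu_mono' card_imset //.
by rewrite !Enu_mono' cards0 cards1 expr0 expr1 !mulr1.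
Qed.
Arguments ftilde_val {R N d r} H u x rho _.

Local Open Scope classical_set_scope.
Local Open Scope ring_scope.

Theorem lemma3p2 (R : realType) (d : nat) (hd : (0 < d)%N)
  (r : nat) (H : @local_fun R r d)
  (ell : nat -> nat)
  (hell_inf : forall M : nat, exists N0 : nat, forall N : nat,
                 (N0 <= N)%N -> (M <= ell N)%N)
  (hell_o : (fun N : nat => (ell N)%:R / N%:R : R) @ \oo --> (0 : R))
  (um up : R) (hum : 0 < um) (humup : um < up) (hup : up < 1)
  (u : forall N : nat, site N d -> R)
  (hu : forall (N : nat) (x : site N d), um <= u N x <= up) :
  exists C : R, 0 < C /\
  exists N0 : nat, forall N : nat, (N0 <= N)%N ->
  forall (x : site N d) (eta : config N d),
    `| condE (nu (1 / 2)) (fx H (u N) x) (avg (ell N) x) eta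
       - ftilde H (u N) x (avg (ell N) x eta)
       + chi (avg (ell N) x eta) / (2 * (lstar (ell N) ^ d)%:R)
         * derive1n 2 (ftilde H (u N) x) (avg (ell N) x eta) |
    <= C / ((ell N)%:R ^+ (2 * d)).
Proof.
set M := #|cube r d|.
have [Cb [Cb0 hCb]] := @ebound_upto R M.
set A : R := \sum_(zeta : {ffun cube r d -> bool}) \sum_(J : {set cube r d})
   `|H zeta * coef zeta J|.
have A0 : 0 <= A by apply: sumr_ge0 => z _; apply: sumr_ge0 => J _.
exists (A * Cb + 1); split.
  by have := mulr_ge0 A0 Cb0; lra.
have [N1 hN1] := hell_inf (maxn (maxn r M) 1).
have [N2 hN2] : exists N2 : nat, forall N, (N2 <= N)%N -> `|(ell N)%:R / N%:R : R| < 1 / 3.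
  have := cvgr_dist_lt _ _ hell_o (1/3) ltac:(by []).
  move=> [] N0 _ hN0; exists N0 => N hN; have := hN0 N hN.
  by rewrite /= sub0r normrN.
exists (maxn N1 (maxn N2 1)) => N hN x eta.
have hl := hN1 N ltac:(lia).
set l := ell N in hl *.
have lr : (r <= l)%N by lia.
have lM : (M <= l)%N by lia.
have l0 : (0 < l)%N by lia.
have h3 : (3 * l < N)%N.
  have := hN2 N ltac:(lia); rewrite -/l.
  have N0 : (0 < N%:R :> R) by rewrite ltr0n; lia.
  rewrite ger0_norm ?divr_ge0 ?ler0n // ltr_pdivrMr // => h.
  rewrite -(ltr_nat R) natrM; lra.
have hN' : (2 * l + 1 <= N)%N by lia.
have sinj := @shiftr_inj N d r l x hN' l0 lr.
set n := (lstar l ^ d)%N.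
have hBn : #|Lambda l x| = n := card_Lambda x hN' l0.
have hn1 : (2 * l + 1 <= n)%N.
  rewrite /n /lstar; have := @leq_pexp2l (2 * l + 1) 1 d ltac:(lia) hd.
  by rewrite expn1.
have n0 : (0 < n)%N by lia.
have hMn : (2 * M <= n)%N by lia.
set K := cntB (Lambda l x) eta.
have Kn : (K <= n)%N.
  by rewrite /K cntB_card -hBn; apply: subset_leq_card; apply: subsetIl.
have rho_eq : (avg l x eta : R) = K%:R / n%:R by rewrite avg_cnt mulrC.
rewrite condE_wsum (wsum_lin _ (fx_expand H (u N) x sinj)).
under eq_bigr => z _ do under eq_bigr => J _ do
  rewrite (condE_mono' x eta (sub_Lambda x J lr) hN' l0) card_imset //.
rewrite !(condE_mono' x eta _ hN' l0) ?finset.sub0set ?finset.sub1set ?x_Lambda //.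
rewrite finset.cards0 finset.cards1 -/K -/n.
have -> : derive1n 2 (ftilde H (u N) x) = derive1n 2 (horner (Pf H (htilde H (u N x)) (derive1 (htilde H) (u N x)) (u N x))).
  by rewrite (ftilde_eq H (u N) x sinj).
rewrite d2_eq (ftilde_val H (u N) x _ sinj) rho_eq.
have a0 : aa K n 0 = 1 :> R by rewrite /aa !bin0 divr1.
have a1 : aa K n 1 = K%:R / n%:R :> R by rewrite /aa !bin1.
rewrite a0 a1.
set rho : R := K%:R / n%:R.
set c0 := htilde H (u N x). set c1 := derive1 (htilde H) (u N x).
set S1 := \sum_z \sum_J _.
set S2 := \sum_z \sum_J _.
set S3 := \sum_z \sum_J _.
set k := chi rho / (2 * n%:R).
have -> : S1 - c0 * 1 - c1 * (rho - u N x * 1) - (S2 - c0 - c1 * (rho - u N x)) + k * S3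
   = S1 - S2 + k * S3 by ring.
rewrite /S1 /S2 /S3 sum3.
have -> : \sum_z \sum_J (H z * coef z J * aa K n #|J| - H z * coef z J * rho ^+ #|J|
     + k * (H z * coef z J * (rho ^+ (#|J| - 2) *+ #|J| ^_ 2)))
   = \sum_z \sum_J (H z * coef z J) * errj K n #|J|.
  apply: eq_bigr => z _; apply: eq_bigr => J _.
  rewrite /errj -/rho -(conv_corr #|J| rho n%:R) -/k.
  move: (H z * coef z J) (aa K n #|J|) (rho ^+ #|J|) (rho ^+ (#|J| - 2) *+ #|J| ^_ 2) => a b c e.
  by ring.
apply: le_trans (ler_norm_sum _ _ _) _.
apply: (@le_trans _ _ (\sum_z \sum_J `|H z * coef z J| * (Cb / n%:R ^+ 2))).
  apply: ler_sum => z _; apply: le_trans (ler_norm_sum _ _ _) _.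
  apply: ler_sum => J _; rewrite normrM; apply: ler_wpM2l => //.
  by apply: hCb => //; apply: max_card.
under eq_bigr do rewrite -mulr_suml.
rewrite -mulr_suml -/A.
have hL : (l ^ (2 * d) <= n ^ 2)%N.
  rewrite mulnC expnM leq_exp2r // /n /lstar leq_exp2r //; lia.
have L0 : 0 < (l%:R : R) ^+ (2 * d) by rewrite exprn_gt0 // ltr0n.
have hL' : (l%:R : R) ^+ (2 * d) <= n%:R ^+ 2 by rewrite -!natrX ler_nat.
have i1 : (n%:R ^+ 2 : R)^-1 <= ((l%:R : R) ^+ (2 * d))^-1.
  by rewrite lef_pV2 ?posrE // (lt_le_trans L0).
have aC : 0 <= A * Cb by rewrite mulr_ge0.
rewrite mulrA; apply: le_trans (ler_wpM2l aC i1) _.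
rewrite ler_wpM2r ?invr_ge0 ?ltW //; lra.
Qed.
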